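(* Let $F\colon[0,+\infty)^N\to[0,+\infty)$ be a metric preserving function. Then for all $(s_i)_{i=1}^N,(s'_i)_{i=1}^N\in[0,+\infty)^N$: (1) $|F(s_1,\dots,s_N)-F(s'_1,\dots,s'_N)|\le F(|s_1-s'_1|,\dots,|s_N-s'_N|)$; (2) if $s_i\le 2s'_i$ for every $i$, then $F(s_1,\dots,s_N)\le 2F(s'_1,\dots,s'_N)$.
   Context: A function $F\colon[0,+\infty)^N\to[0,+\infty)$ is metric preserving if for any metric spaces $(X_1,d_1),\dots,(X_N,d_N)$, $d_F((x_i),(x'_i)):=F(d_1(x_1,x'_1),\dots,d_N(x_N,x'_N))$ is a metric on $X_1\times\cdots\times X_N$. *)

(* Defs.v *)
From Stdlib Require Import Reals.
From Stdlib Require Fin.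
Open Scope R_scope.

Definition is_metric (X : Type) (d : X -> X -> R) : Prop :=
  (forall x y, 0 <= d x y) /\
  (forall x y, d x y = 0 <-> x = y) /\
  (forall x y, d x y = d y x) /\
  (forall x y z, d x z <= d x y + d y z).

Definition nonneg_vec (N : nat) (s : Fin.t N -> R) : Prop :=
  forall i, 0 <= s i.

Definition metric_preserving (N : nat) (F : (Fin.t N -> R) -> R) : Prop :=
  (forall s, nonneg_vec N s -> 0 <= F s) /\
  forall (X : Fin.t N -> Type) (d : forall i, X i -> X i -> R),
    (forall i, is_metric (X i) (d i)) ->
    is_metric (forall i, X i)
      (fun x x' => F (fun i => d i (x i) (x' i))).

(* Main.v *)
Require Import Defs.
From Stdlib Require Import Reals.
From Stdlib Require Fin.
From Stdlib Require Import Lra Lia FunctionalExtensionality Arith.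
Open Scope R_scope.

Definition D (p q : R) (x y : nat) : R :=
  if Nat.eqb x y then 0 else if Nat.eqb (x + y) 1 then p else q.

Ltac crush :=
  unfold D; repeat match goal with |- context [Nat.eqb ?a ?b] =>
    destruct (Nat.eqb_spec a b) end; first [lra | exfalso; lia | idtac].

Lemma D_metric p q : 0 < p -> 0 < q -> p <= 2 * q -> is_metric nat (D p q).
Proof.
  intros Hp Hq Hpq. split; [|split; [|split]].
  - intros x y; crush.
  - intros x y; split.
    + unfold D; destruct (Nat.eqb_spec x y); auto;
      destruct (Nat.eqb_spec (x+y) 1); intros; lra.
    + intros ->; unfold D; rewrite Nat.eqb_refl; reflexivity.
  - intros x y; unfold D; rewrite Nat.eqb_sym, Nat.add_comm; reflexivity.
  - intros x y z; crush.
Qed.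

Lemma Rabs_metric : is_metric R (fun x y => Rabs (x - y)).
Proof.
  split; [|split; [|split]].
  - intros; apply Rabs_pos.
  - intros x y; split.
    + intros H. destruct (Req_dec (x - y) 0); [lra|].
      pose proof (Rabs_no_R0 _ H0); contradiction.
    + intros ->; replace (y - y) with 0 by ring; apply Rabs_R0.
  - intros; apply Rabs_minus_sym.
  - intros x y z. replace (x - z) with ((x - y) + (y - z)) by ring.
    apply Rabs_triang.
Qed.

Theorem mainTheorem5 (N : nat) (F : (Fin.t N -> R) -> R) :
  metric_preserving N F ->
  forall s s' : Fin.t N -> R, nonneg_vec N s -> nonneg_vec N s' ->
    Rabs (F s - F s') <= F (fun i => Rabs (s i - s' i)) /\
    ((forall i, s i <= 2 * s' i) -> F s <= 2 * F s').
Proof.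
  intros [Hnn HM] s s' Hs Hs'. split.
  - destruct (HM (fun _ => R) (fun _ x y => Rabs (x - y)) (fun _ => Rabs_metric))
      as [_ [_ [_ Htri]]].
    pose proof (Htri (fun _ => 0) s' s) as T1.
    pose proof (Htri (fun _ => 0) s s') as T2.
    simpl in T1, T2.
    assert (E1 : (fun i => Rabs (0 - s i)) = s).
    { apply functional_extensionality; intro i.
      rewrite Rabs_minus_sym, Rminus_0_r; apply Rabs_right; generalize (Hs i); lra. }
    assert (E2 : (fun i => Rabs (0 - s' i)) = s').
    { apply functional_extensionality; intro i.
      rewrite Rabs_minus_sym, Rminus_0_r; apply Rabs_right; generalize (Hs' i); lra. }
    assert (E3 : (fun i => Rabs (s' i - s i)) = (fun i => Rabs (s i - s' i))).
    { apply functional_extensionality; intro i; apply Rabs_minus_sym. }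
    rewrite E1, E2, E3 in *.
    apply Rabs_le; lra.
  - intros Hle.
    set (q := fun i => if Rlt_dec 0 (s' i) then s' i else 1).
    set (p := fun i => if Rlt_dec 0 (s i) then s i else q i).
    assert (Hm : forall i, is_metric nat (D (p i) (q i))).
    { intro i. specialize (Hle i). specialize (Hs i). specialize (Hs' i).
      unfold p, q; destruct (Rlt_dec 0 (s' i)); destruct (Rlt_dec 0 (s i));
        apply D_metric; lra. }
    destruct (HM (fun _ => nat) (fun i => D (p i) (q i)) Hm) as [_ [_ [_ Htri]]].
    set (a := fun _ : Fin.t N => 0%nat).
    set (b := fun i => if Rlt_dec 0 (s i) then 1%nat else 0%nat).
    set (c := fun i => if Rlt_dec 0 (s' i) then 2%nat else 0%nat).
    pose proof (Htri a c b) as T. simpl in T.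
    assert (Eab : (fun i => D (p i) (q i) (a i) (b i)) = s).
    { apply functional_extensionality; intro i.
      specialize (Hle i). specialize (Hs i). specialize (Hs' i).
      unfold a, b, p, q; destruct (Rlt_dec 0 (s' i)); destruct (Rlt_dec 0 (s i));
        unfold D; simpl; lra. }
    assert (Eac : (fun i => D (p i) (q i) (a i) (c i)) = s').
    { apply functional_extensionality; intro i.
      specialize (Hle i). specialize (Hs i). specialize (Hs' i).
      unfold a, c, p, q; destruct (Rlt_dec 0 (s' i)); destruct (Rlt_dec 0 (s i));
        unfold D; simpl; lra. }
    assert (Ecb : (fun i => D (p i) (q i) (c i) (b i)) = s').
    { apply functional_extensionality; intro i.
      specialize (Hle i). specialize (Hs i). specialize (Hs' i).
      unfold b, c, p, q; destruct (Rlt_dec 0 (s' i)); destruct (Rlt_dec 0 (s i));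
        unfold D; simpl; lra. }
    rewrite Eab, Eac, Ecb in T. lra.
Qed.
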